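(* Let $\boldsymbol c\in(0,1)$ and $|y|<\boldsymbol c$. With $z_{ij}$ as defined below, $$|z_{ij}''(y)|\le3\max_{l=1,\dots,d}\frac{\big(m_l^{(2)}(\tfrac1{1-\boldsymbol c})\big)^2}{\big(m_l^{(0)}(1-\boldsymbol c)\big)^4}\qquad\text{for all }i,j.$$
   Context: For each $i$, $Q_{i,n}=\Phi^{-1}(P[X_{i,t}\le n])$ where $X_{i,t}$ is $\mathbb N_0$-valued and $\Phi$ is the standard normal CDF (summands with $Q=\pm\infty$ are $0$). $z_{ij}(y)=\big(\sum_{n_0,n_1\ge0}\exp(-\tfrac12(Q_{i,n_0}^2+Q_{j,n_1}^2-2yQ_{i,n_0}Q_{j,n_1}))\big)^{-1}$ for $y\in(-1,1)$, and $m_i^{(k)}(u)=\frac1{\sqrt{2\pi}}\sum_{n\ge0}e^{-Q_{i,n}^2/(2u)}|Q_{i,n}|^k$, assumed finite for the arguments used, with $m_i^{(0)}(1-\boldsymbol c)>0$. *)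

(* Defs.v *)
From Stdlib Require Import Reals List ClassicalEpsilon.
From Coquelicot Require Import Coquelicot.
Open Scope R_scope.

(* standard normal density and CDF:  Phi x = 1/2 + int_0^x phi  (= int_{-oo}^x phi) *)
Definition std_normal_pdf (x : R) : R := exp (- (x ^ 2) / 2) / sqrt (2 * PI).
Definition Phi (x : R) : R := / 2 + RInt std_normal_pdf 0 x.

Definition Phi_inv (p : R) : Rbar :=
  if Rle_dec p 0 then m_infty
  else if Rle_dec 1 p then p_infty
  else Finite (epsilon (inhabits 0) (fun x => Phi x = p)).

(* The marginal law of X_{i,t} (N_0-valued) is given by its pmf  pmf i : nat -> R;
   its CDF is  P[X_{i,t} <= n] = sum_{k=0}^n pmf i k. *)
Definition cdf (pmf : nat -> nat -> R) (i n : nat) : R := sum_f_R0 (pmf i) n.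

Definition is_pmf (q : nat -> R) : Prop := (forall n, 0 <= q n) /\ is_series q 1.

Definition Q (pmf : nat -> nat -> R) (i n : nat) : Rbar := Phi_inv (cdf pmf i n).

Definition z_term (pmf : nat -> nat -> R) (i j : nat) (y : R) (n0 n1 : nat) : R :=
  match Q pmf i n0, Q pmf j n1 with
  | Finite a, Finite b => exp (- (1 / 2) * (a ^ 2 + b ^ 2 - 2 * y * a * b))
  | _, _ => 0
  end.

Definition z (pmf : nat -> nat -> R) (i j : nat) (y : R) : R :=
  / Series (fun n0 => Series (fun n1 => z_term pmf i j y n0 n1)).

Definition m_term (pmf : nat -> nat -> R) (i k : nat) (u : R) (n : nat) : R :=
  match Q pmf i n with
  | Finite q => exp (- (q ^ 2) / (2 * u)) * (Rabs q) ^ k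
  | _ => 0
  end.

Definition m (pmf : nat -> nat -> R) (i k : nat) (u : R) : R :=
  / sqrt (2 * PI) * Series (m_term pmf i k u).

(* max_{l = 0..d-1} f l  (all values used are >= 0, d >= 1 in the theorem) *)
Definition max_over (d : nat) (f : nat -> R) : R :=
  fold_right Rmax 0 (map f (seq 0 d)).

(* Main.v *)
Require Import Defs.
From Stdlib Require Import Reals List ClassicalEpsilon Lra Psatz.
From Coquelicot Require Import Coquelicot.
Open Scope R_scope.


Lemma exs_le (a b : nat -> R) : (forall n, Rabs (a n) <= b n) -> ex_series b -> ex_series a.
Proof. intros H Hb. apply (ex_series_le a b); [|exact Hb]. intros n. exact (H n). Qed.

Lemma exs_plus (a b : nat -> R) : ex_series a -> ex_series b -> ex_series (fun n => a n + b n).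
Proof. intros. apply (ex_series_plus a b); auto. Qed.

Lemma exs_minus (a b : nat -> R) : ex_series a -> ex_series b -> ex_series (fun n => a n - b n).
Proof. intros. apply (ex_series_minus a b); auto. Qed.

Lemma exs_scal (c : R) (a : nat -> R) : ex_series a -> ex_series (fun n => c * a n).
Proof. intros. apply (ex_series_scal_l c a); auto. Qed.

Lemma exs_abs (a : nat -> R) (b : nat -> R) : (forall n, Rabs (a n) <= b n) -> ex_series b ->
  ex_series (fun n => Rabs (a n)).
Proof. intros H Hb. apply (exs_le _ b); auto. intros n; rewrite Rabs_Rabsolu; auto. Qed.

Lemma Series_abs_le (a b : nat -> R) : (forall n, Rabs (a n) <= b n) -> ex_series b ->
  Rabs (Series a) <= Series b.
Proof.
  intros H Hb. eapply Rle_trans. apply Series_Rabs. eapply exs_abs; eauto.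
  apply Series_le; auto. intros n; split; auto using Rabs_pos.
Qed.

Lemma Series_zero : Series (fun _ => 0) = 0.
Proof. transitivity (Series (fun n:nat => 0 * 0)). apply Series_ext; intros; ring. rewrite Series_scal_l; ring. Qed.

Lemma Series_ge0 (a : nat -> R) : (forall n, 0 <= a n) -> ex_series a -> 0 <= Series a.
Proof. intros H Ha. rewrite <- Series_zero. apply Series_le; auto. intros; split; auto; lra. Qed.

Lemma rem_series (f0 f1 g M : nat -> R) (h : R) :
  ex_series f0 -> ex_series f1 -> ex_series g -> ex_series M ->
  (forall n, Rabs (f1 n - f0 n - h * g n) <= h ^ 2 * M n) ->
  Rabs (Series f1 - Series f0 - h * Series g) <= h ^ 2 * Series M.
Proof.
  intros H0 H1 Hg HM Hb.
  assert (E : Series f1 - Series f0 - h * Series g = Series (fun n => f1 n - f0 n - h * g n)).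
  { rewrite Series_minus. rewrite Series_minus; auto. rewrite Series_scal_l. ring.
    all: try apply exs_minus; try apply exs_scal; auto. }
  rewrite E, <- Series_scal_l. apply Series_abs_le; auto. apply exs_scal; auto.
Qed.

Lemma deriv_series (f g : nat -> R -> R) (M : nat -> R) (y d : R) :
  0 < d -> ex_series M -> (forall n, 0 <= M n) ->
  (forall h, Rabs h < d -> ex_series (fun n => f n (y + h))) ->
  ex_series (fun n => g n y) ->
  (forall n h, Rabs h < d -> Rabs (f n (y + h) - f n y - h * g n y) <= h ^ 2 * M n) ->
  is_derive (fun x => Series (fun n => f n x)) y (Series (fun n => g n y)).
Proof.
  intros Hd HM HM0 Hf Hg Hb. apply is_derive_Reals. intros eps Heps.
  set (SM := Series M).
  assert (HSM : 0 <= SM).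
  { unfold SM. apply Series_ge0; auto. }
  assert (Hdel : 0 < Rmin d (eps / (SM + 1))).
  { apply Rmin_pos; auto. apply Rdiv_lt_0_compat; lra. }
  exists (mkposreal _ Hdel). intros h Hh0 Hh. simpl in Hh.
  assert (Hh1 : Rabs h < d) by (eapply Rlt_le_trans; [exact Hh| apply Rmin_l]).
  assert (Hh2 : Rabs h < eps / (SM + 1)) by (eapply Rlt_le_trans; [exact Hh| apply Rmin_r]).
  assert (Hf0 : ex_series (fun n => f n y)).
  { replace y with (y + 0) at 1 by ring. 
    assert (K := Hf 0). rewrite Rabs_R0 in K. specialize (K Hd).
    eapply ex_series_ext; [|exact K]. intros n; simpl. now rewrite Rplus_0_r. }
  pose proof (rem_series (fun n => f n y) (fun n => f n (y + h)) (fun n => g n y) M h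
    Hf0 (Hf h Hh1) Hg HM (fun n => Hb n h Hh1)) as R.
  replace ((Series (fun n => f n (y + h)) - Series (fun n => f n y)) / h - Series (fun n => g n y))
    with ((Series (fun n => f n (y + h)) - Series (fun n => f n y) - h * Series (fun n => g n y)) / h)
    by (field; auto).
  unfold Rdiv. rewrite Rabs_mult, Rabs_inv.
  assert (Hah : 0 < Rabs h) by (apply Rabs_pos_lt; auto).
  apply (Rmult_lt_reg_r (Rabs h)); auto. rewrite Rmult_assoc, Rinv_l by lra. rewrite Rmult_1_r.
  eapply Rle_lt_trans. exact R. fold SM. rewrite <- (pow2_abs h).
  assert (Rabs h * (SM + 1) < eps).
  { apply (Rmult_lt_reg_r (/ (SM+1))). apply Rinv_0_lt_compat; lra.
    rewrite Rmult_assoc, Rinv_r by lra. lra. }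
  nra.
Qed.


Lemma exp_le x y : x <= y -> exp x <= exp y.
Proof. intros [H|H]. left; apply exp_increasing; auto. subst; lra. Qed.

Lemma expm1_bound v : Rabs (exp v - 1 - v) <= v ^ 2 * exp (Rabs v).
Proof.
  pose proof (exp_ineq1_le v) as H1.
  pose proof (exp_ineq1_le (- v)) as H2.
  assert (H3 : exp v - 1 <= v * exp v).
  { assert (exp v * exp (- v) = 1) by (rewrite <- exp_plus; replace (v + - v) with 0 by ring; apply exp_0).
    pose proof (exp_pos v). nra. }
  rewrite Rabs_pos_eq by lra.
  destruct (Rle_dec 0 v).
  - rewrite Rabs_pos_eq by lra. pose proof (exp_pos v). nra.
  - rewrite Rabs_left by lra. assert (1 <= exp (- v)).
    { pose proof (exp_ineq1_le (- v)). lra. }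
    assert (exp v - 1 - v <= v * (exp v - 1)) by nra. nra.
Qed.

Lemma pow_bound m x : (m <= 4)%nat -> 0 <= x -> x ^ m <= 1 + x ^ 4.
Proof.
  intros Hm Hx.
  assert (H2 : 0 <= x^2) by nra.
  destruct m as [|[|[|[|[|m]]]]]; simpl.
  all: try (exfalso; lia).
  all: destruct (Rle_dec x 1).
  all: assert (0 <= x*x) by nra; assert (0 <= x*x*x) by nra; assert (0<= x*x*x*x) by nra.
  all: try nra.
  all: try (assert (x*x <= 1) by nra; assert (x*x*x <= 1) by nra; nra).
  all: try (assert (x <= x*x) by nra; assert (x*x <= x*x*x) by nra; assert (x*x*x <= x*x*x*x) by nra; nra).
Qed.

Lemma key_exp a b y t r : Rabs y + t <= r -> 0 <= t ->
  exp (-(1/2) * (a^2 + b^2 - 2*y*a*b)) * exp (t * Rabs (a*b))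
  <= exp (-(1-r)*a^2/2) * exp (-(1-r)*b^2/2).
Proof.
  intros H Ht. rewrite <- !exp_plus. apply exp_le.
  rewrite Rabs_mult.
  assert (E1 : y*a*b <= Rabs y * (Rabs a * Rabs b)).
  { rewrite <- !Rabs_mult. replace (y*a*b) with (y*(a*b)) by ring. 
    apply Rle_abs. }
  assert (E2 : 2 * (Rabs a * Rabs b) <= a^2 + b^2).
  { rewrite <- (pow2_abs a), <- (pow2_abs b). pose proof (pow2_ge_0 (Rabs a - Rabs b)). simpl in *. lra. }
  pose proof (Rabs_pos a). pose proof (Rabs_pos b). pose proof (Rabs_pos y).
  nra.
Qed.


Lemma series_mono (a b : nat -> R) : (forall n, a n <= b n) -> ex_series a -> ex_series b ->
  Series a <= Series b.
Proof.
  intros H Ha Hb. assert (0 <= Series (fun n => b n - a n)).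
  { apply Series_ge0. intros n; specialize (H n); lra. apply exs_minus; auto. }
  rewrite Series_minus in H0; auto. lra.
Qed.

Definition DS (F : nat -> nat -> R) := Series (fun n0 => Series (F n0)).
Definition ds_ok (F : nat -> nat -> R) := (forall n0, ex_series (F n0)) /\ ex_series (fun n0 => Series (F n0)).

Lemma ds_dom (F : nat -> nat -> R) (u v : nat -> R) :
  (forall n0 n1, Rabs (F n0 n1) <= u n0 * v n1) -> (forall n, 0 <= u n) -> (forall n, 0 <= v n) ->
  ex_series u -> ex_series v ->
  ds_ok F /\ (forall n0, Rabs (Series (F n0)) <= u n0 * Series v).
Proof.
  intros H Hu Hv Eu Ev.
  assert (A1 : forall n0, Rabs (Series (F n0)) <= u n0 * Series v).
  { intros n0. rewrite <- Series_scal_l. apply Series_abs_le; auto. apply exs_scal; auto. }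
  split; [split|]; auto.
  - intros n0. apply (exs_le _ (fun n1 => u n0 * v n1)); auto. apply exs_scal; auto.
  - apply (exs_le _ (fun n0 => u n0 * Series v)); auto. apply ex_series_scal_r; auto.
Qed.

Lemma ds_le F G : (forall n0 n1, F n0 n1 <= G n0 n1) -> ds_ok F -> ds_ok G -> DS F <= DS G.
Proof.
  intros H [F1 F2] [G1 G2]. unfold DS. apply series_mono; auto.
  intros n0. apply series_mono; auto.
Qed.

Lemma ds_lin F G al be : ds_ok F -> ds_ok G ->
  ds_ok (fun n0 n1 => al * F n0 n1 + be * G n0 n1) /\
  DS (fun n0 n1 => al * F n0 n1 + be * G n0 n1) = al * DS F + be * DS G.
Proof.
  intros [F1 F2] [G1 G2].
  assert (E : forall n0, Series (fun n1 => al * F n0 n1 + be * G n0 n1) = al * Series (F n0) + be * Series (G n0)).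
  { intros n0. rewrite Series_plus, !Series_scal_l; auto; apply exs_scal; auto. }
  split; [split|].
  - intros n0. apply exs_plus; apply exs_scal; auto.
  - eapply ex_series_ext. intros n0; symmetry; apply E. apply exs_plus; apply exs_scal; auto.
  - unfold DS. rewrite (Series_ext _ _ E). rewrite Series_plus, !Series_scal_l; auto; apply exs_scal; auto.
Qed.

Lemma ds_prod (p q : nat -> R) : ex_series p -> ex_series q -> (forall n, 0 <= p n) -> (forall n, 0 <= q n) ->
  ds_ok (fun n0 n1 => p n0 * q n1) /\ DS (fun n0 n1 => p n0 * q n1) = Series p * Series q.
Proof.
  intros Hp Hq Hp0 Hq0. split.
  - apply (ds_dom _ p q); auto. intros; rewrite Rabs_pos_eq; [lra|]. apply Rmult_le_pos; auto.
  - unfold DS. rewrite <- Series_scal_r. apply Series_ext. intros n0. apply Series_scal_l.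
Qed.


Definition Tm pmf i j (k : nat) (y : R) (n0 n1 : nat) : R :=
  match Q pmf i n0, Q pmf j n1 with
  | Finite a, Finite b => (a*b)^k * exp (-(1/2) * (a^2 + b^2 - 2*y*a*b))
  | _, _ => 0 end.

Definition Ub pmf i (r : R) (n : nat) : R :=
  match Q pmf i n with Finite a => (1 + a^4) * exp (-(1-r)*a^2/2) | _ => 0 end.

Lemma Ub_nonneg pmf i r n : 0 <= Ub pmf i r n.
Proof.
  unfold Ub. destruct (Q pmf i n); try lra. apply Rmult_le_pos.
  assert (0 <= r0^4) by (replace (r0^4) with ((r0^2)^2) by ring; apply pow2_ge_0). lra.
  left; apply exp_pos.
Qed.

Lemma abs_pow_bound a b k : (k <= 4)%nat -> Rabs ((a*b)^k) <= (1 + a^4) * (1 + b^4).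
Proof.
  intros Hk. rewrite <- RPow_abs, Rabs_mult, Rpow_mult_distr.
  assert (Ea : Rabs a ^ 4 = a^4) by (replace 4%nat with (2*2)%nat by reflexivity; rewrite !pow_mult, pow2_abs; reflexivity).
  assert (Eb : Rabs b ^ 4 = b^4) by (replace 4%nat with (2*2)%nat by reflexivity; rewrite !pow_mult, pow2_abs; reflexivity).
  pose proof (pow_bound k (Rabs a) Hk (Rabs_pos a)).
  pose proof (pow_bound k (Rabs b) Hk (Rabs_pos b)).
  apply Rmult_le_compat; try (apply pow_le; apply Rabs_pos); lra.
Qed.

Lemma Tm_bound pmf i j k y r n0 n1 : (k <= 4)%nat -> Rabs y <= r ->
  Rabs (Tm pmf i j k y n0 n1) <= Ub pmf i r n0 * Ub pmf j r n1.
Proof.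
  intros Hk Hy. unfold Tm, Ub.
  destruct (Q pmf i n0) as [a| |]; destruct (Q pmf j n1) as [b| |];
    rewrite ?Rabs_R0; try (rewrite ?Rmult_0_r, ?Rmult_0_l; lra).
  - rewrite Rabs_mult, (Rabs_pos_eq (exp _)) by (left; apply exp_pos).
    pose proof (key_exp a b y 0 r ltac:(lra) ltac:(lra)) as K.
    rewrite Rmult_0_l, exp_0, Rmult_1_r in K.
    pose proof (abs_pow_bound a b k Hk).
    replace ((1 + a ^ 4) * exp (- (1 - r) * a ^ 2 / 2) * ((1 + b ^ 4) * exp (- (1 - r) * b ^ 2 / 2)))
      with (((1 + a ^ 4) * (1 + b^4)) * (exp (- (1 - r) * a ^ 2 / 2) * exp (- (1 - r) * b ^ 2 / 2))) by ring.
    apply Rmult_le_compat; auto using Rabs_pos. left; apply exp_pos.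
Qed.

Lemma Tm_rem pmf i j k y h r n0 n1 : (k <= 2)%nat -> Rabs y + Rabs h <= r ->
  Rabs (Tm pmf i j k (y + h) n0 n1 - Tm pmf i j k y n0 n1 - h * Tm pmf i j (S k) y n0 n1)
  <= h ^ 2 * (Ub pmf i r n0 * Ub pmf j r n1).
Proof.
  intros Hk Hy. unfold Tm, Ub.
  destruct (Q pmf i n0) as [a| |]; destruct (Q pmf j n1) as [b| |];
    rewrite ?Rminus_0_r, ?Rmult_0_r, ?Rminus_0_r, ?Rabs_R0; try (rewrite ?Rmult_0_r, ?Rmult_0_l; lra).
  - set (e := exp (-(1/2) * (a^2 + b^2 - 2*y*a*b))).
    set (p := a*b).
    assert (E1 : exp (- (1 / 2) * (a ^ 2 + b ^ 2 - 2 * (y + h) * a * b)) = e * exp (h * p)).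
    { unfold e, p. rewrite <- exp_plus. f_equal. field. }
    rewrite E1.
    replace (p ^ k * (e * exp (h * p)) - p ^ k * e - h * (p ^ S k * e))
      with ((p^k * e) * (exp (h*p) - 1 - h*p)) by (change (p ^ S k) with (p * p ^ k); ring).
    rewrite Rabs_mult. pose proof (expm1_bound (h*p)) as X.
    rewrite Rabs_mult, (Rabs_pos_eq e) by (left; apply exp_pos).
    pose proof (key_exp a b y (Rabs h) r ltac:(lra) (Rabs_pos h)) as K. fold e p in K.
    pose proof (abs_pow_bound a b (k+2) ltac:(lia)) as P. fold p in P.
    rewrite pow_add in P. rewrite Rabs_mult in P.
    assert (Ee : 0 < e) by apply exp_pos.
    assert (Eq : Rabs (h * p) = Rabs h * Rabs p) by apply Rabs_mult.
    rewrite Eq in X.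
    assert (Hp2 : Rabs (p^2) = p^2) by (apply Rabs_pos_eq; apply pow2_ge_0).
    rewrite Hp2 in P.
    apply Rle_trans with (Rabs (p^k) * e * ((h*p)^2 * exp (Rabs h * Rabs p))).
    { apply Rmult_le_compat_l; auto. apply Rmult_le_pos; auto using Rabs_pos; lra. }
    replace (Rabs (p ^ k) * e * ((h * p) ^ 2 * exp (Rabs h * Rabs p)))
      with (h^2 * ((Rabs (p^k) * p^2) * (e * exp (Rabs h * Rabs p)))) by ring.
    apply Rmult_le_compat_l; [apply pow2_ge_0|].
    replace ((1 + a ^ 4) * exp (- (1 - r) * a ^ 2 / 2) * ((1 + b ^ 4) * exp (- (1 - r) * b ^ 2 / 2)))
      with (((1 + a ^ 4) * (1 + b^4)) * (exp (- (1 - r) * a ^ 2 / 2) * exp (- (1 - r) * b ^ 2 / 2))) by ring.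
    apply Rmult_le_compat; auto.
    apply Rmult_le_pos; auto using Rabs_pos, pow2_ge_0.
    left; apply Rmult_lt_0_compat; auto; apply exp_pos.
Qed.


Lemma exp_le1 x : x <= 0 -> exp x <= 1.
Proof. intros. rewrite <- exp_0. apply exp_le; auto. Qed.
Lemma exp_ge1 x : 0 <= x -> 1 <= exp x.
Proof. intros. rewrite <- exp_0. apply exp_le; auto. Qed.

Lemma m_term_nonneg pmf i k u n : 0 <= m_term pmf i k u n.
Proof. unfold m_term. destruct (Q pmf i n); try lra. apply Rmult_le_pos. left; apply exp_pos.
  apply pow_le, Rabs_pos. Qed.

Lemma Ub_series pmf i c r : 0 < c < 1 -> 0 <= r < c ->
  ex_series (m_term pmf i 2 (/ (1 - c))) -> ex_series (m_term pmf i 0 (1 - c)) ->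
  ex_series (Ub pmf i r).
Proof.
  intros Hc Hr H2 H0.
  set (K1 := 2 * exp (1 / (2 * (1 - c)))). set (K2 := 4 / (c - r)).
  apply (exs_le _ (fun n => K1 * m_term pmf i 0 (1 - c) n + K2 * m_term pmf i 2 (/ (1 - c)) n)).
  2: apply exs_plus; apply exs_scal; auto.
  intros n. rewrite Rabs_pos_eq by apply Ub_nonneg. unfold Ub, m_term.
  destruct (Q pmf i n) as [a| |]; try lra.
  rewrite pow2_abs. simpl (Rabs a ^ 0).
  replace (- a ^ 2 / (2 * / (1 - c))) with (- (1 - c) * a ^ 2 / 2) by (field; lra).
  assert (HK2 : 0 < K2) by (unfold K2; apply Rdiv_lt_0_compat; lra).
  assert (Ha2 : 0 <= a^2) by apply pow2_ge_0.
  assert (Ea4 : a^4 = a^2 * a^2) by ring.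
  destruct (Rle_dec (a^2) 1) as [Hle|Hgt].
  - assert (X1 : exp (- (1 - r) * a ^ 2 / 2) <= 1).
    { apply exp_le1. assert (0 <= (1-r)*a^2) by nra. replace (- (1 - r) * a ^ 2 / 2) with (-((1-r)*a^2)/2) by field. lra. }
    assert (X2 : 2 <= K1 * (exp (- a ^ 2 / (2 * (1 - c))) * 1)).
    { unfold K1. rewrite Rmult_1_r, Rmult_assoc, <- exp_plus.
      assert (1 <= exp (1 / (2 * (1 - c)) + - a ^ 2 / (2 * (1 - c)))).
      { apply exp_ge1.
        replace (1 / (2 * (1 - c)) + - a ^ 2 / (2 * (1 - c))) with ((1 - a^2) / (2 * (1 - c))) by (field; lra).
        apply Rmult_le_pos; try lra. left; apply Rinv_0_lt_compat; lra. }
      lra. }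
    assert (X3 : 0 <= K2 * (exp (- (1 - c) * a ^ 2 / 2) * a ^ 2)).
    { apply Rmult_le_pos; try lra. apply Rmult_le_pos; auto. left; apply exp_pos. }
    assert (0 <= exp (- (1 - r) * a ^ 2 / 2)) by (left; apply exp_pos).
    assert (a^4 <= 1) by nra.
    apply Rle_trans with 2; [|lra].
    apply Rle_trans with (2 * 1); [|lra]. assert (0 <= a^4) by nra. apply Rmult_le_compat; lra.
  - set (x := (c - r) * a^2 / 2).
    assert (Ex : exp (- (1 - r) * a ^ 2 / 2) = exp (- (1 - c) * a ^ 2 / 2) * exp (- x)).
    { rewrite <- exp_plus. f_equal. unfold x. field. }
    assert (Xx : a^2 * exp (- x) <= 2 / (c - r)).
    { pose proof (exp_ineq1_le x).
      assert (exp x * exp (- x) = 1) by (rewrite <- exp_plus; replace (x + - x) with 0 by ring; apply exp_0).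
      assert (0 < exp (-x)) by apply exp_pos.
      assert (a^2 = 2 / (c - r) * x) by (unfold x; field; lra).
      assert (0 < 2 / (c - r)) by (apply Rdiv_lt_0_compat; lra).
      assert (x * exp (- x) <= 1) by nra.
      rewrite H4. rewrite Rmult_assoc. rewrite <- (Rmult_1_r (2 / (c - r))) at 2.
      apply Rmult_le_compat_l; lra. }
    rewrite Ex.
    assert (0 < exp (- (1 - c) * a ^ 2 / 2)) by apply exp_pos.
    assert (0 < exp (- a ^ 2 / (2 * (1 - c))) * 1) by (rewrite Rmult_1_r; apply exp_pos).
    assert (0 < K1) by (unfold K1; pose proof (exp_pos (1 / (2 * (1 - c)))); lra).
    assert (K2 * (exp (- (1 - c) * a ^ 2 / 2) * a ^ 2) = 2 * (2 / (c - r)) * (exp (- (1 - c) * a ^ 2 / 2) * a ^ 2)).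
    { unfold K2. field. lra. }
    assert ((1 + a ^ 4) * (exp (- (1 - c) * a ^ 2 / 2) * exp (- x)) <= 2 * a^2 * (exp (- (1 - c) * a ^ 2 / 2) * (a^2 * exp (- x)))).
    { assert (0 < exp (-x)) by apply exp_pos. apply Rnot_le_lt in Hgt.
      assert (1 + a^4 <= 2*(a^2*a^2)) by nra.
      replace (2 * a ^ 2 * (exp (- (1 - c) * a ^ 2 / 2) * (a ^ 2 * exp (- x)))) with
        ((2*(a^2*a^2)) * (exp (- (1 - c) * a ^ 2 / 2) * exp (- x))) by ring.
      apply Rmult_le_compat_r; auto. apply Rmult_le_pos; lra. }
    assert (0 <= exp (- (1 - c) * a ^ 2 / 2) * a ^ 2) by nra.
    nra.
Qed.


Definition Sk pmf i j k y := DS (Tm pmf i j k y).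

Lemma Tm_dom pmf i j k y r : (k <= 4)%nat -> Rabs y <= r ->
  ex_series (Ub pmf i r) -> ex_series (Ub pmf j r) ->
  ds_ok (Tm pmf i j k y) /\ (forall n0, Rabs (Series (Tm pmf i j k y n0)) <= Ub pmf i r n0 * Series (Ub pmf j r)).
Proof.
  intros Hk Hy Hi Hj. apply ds_dom; auto using Ub_nonneg.
  intros; apply Tm_bound; auto.
Qed.

Lemma Sk_derive pmf i j k c y : 0 < c < 1 -> (k <= 2)%nat ->
  ex_series (m_term pmf i 2 (/ (1 - c))) -> ex_series (m_term pmf i 0 (1 - c)) ->
  ex_series (m_term pmf j 2 (/ (1 - c))) -> ex_series (m_term pmf j 0 (1 - c)) ->
  Rabs y < c ->
  is_derive (Sk pmf i j k) y (Sk pmf i j (S k) y).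
Proof.
  intros Hc Hk Hi2 Hi0 Hj2 Hj0 Hy.
  set (r := (Rabs y + c) / 2).
  pose proof (Rabs_pos y).
  assert (Hr : 0 <= r < c) by (unfold r; lra).
  assert (Ui := Ub_series pmf i c r Hc Hr Hi2 Hi0).
  assert (Uj := Ub_series pmf j c r Hc Hr Hj2 Hj0).
  set (d := r - Rabs y).
  assert (Hd : 0 < d) by (unfold d, r; lra).
  unfold Sk, DS.
  apply (deriv_series (fun n0 x => Series (Tm pmf i j k x n0)) (fun n0 x => Series (Tm pmf i j (S k) x n0))
           (fun n0 => Ub pmf i r n0 * Series (Ub pmf j r)) y d Hd).
  - apply ex_series_scal_r; auto.
  - intros n. apply Rmult_le_pos; auto using Ub_nonneg. apply Series_ge0; auto using Ub_nonneg.
  - intros h Hh. assert (Rabs (y + h) <= r) by (pose proof (Rabs_triang y h); unfold d in Hh; lra).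
    destruct (Tm_dom pmf i j k (y+h) r ltac:(lia) H0 Ui Uj) as [[_ X] _]. exact X.
  - destruct (Tm_dom pmf i j (S k) y r ltac:(lia) ltac:(unfold r; lra) Ui Uj) as [[_ X] _]. exact X.
  - intros n0 h Hh.
    assert (Hyh : Rabs (y + h) <= r) by (pose proof (Rabs_triang y h); unfold d in Hh; lra).
    assert (Hy' : Rabs y <= r) by (unfold r; lra).
    replace (Ub pmf i r n0 * Series (Ub pmf j r)) with (Series (fun n1 => Ub pmf i r n0 * Ub pmf j r n1)) by (apply Series_scal_l).
    apply rem_series.
    + destruct (Tm_dom pmf i j k y r ltac:(lia) Hy' Ui Uj) as [[X _] _]. apply X.
    + destruct (Tm_dom pmf i j k (y+h) r ltac:(lia) Hyh Ui Uj) as [[X _] _]. apply X.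
    + destruct (Tm_dom pmf i j (S k) y r ltac:(lia) Hy' Ui Uj) as [[X _] _]. apply X.
    + apply exs_scal; auto.
    + intros n1. apply Tm_rem; auto. unfold d in Hh; lra.
Qed.


Lemma fold_max_ge x L : In x L -> x <= fold_right Rmax 0 L.
Proof.
  induction L as [|a L IH]; simpl; [tauto|].
  intros [->|H]. apply Rmax_l. eapply Rle_trans; [apply IH; auto| apply Rmax_r].
Qed.

Lemma max_over_ge d f l : (l < d)%nat -> f l <= max_over d f.
Proof.
  intros H. unfold max_over. apply fold_max_ge. apply in_map. apply in_seq. lia.
Qed.

Lemma z_eq pmf i j x : z pmf i j x = / Sk pmf i j 0 x.
Proof.
  unfold z, Sk, DS. f_equal. apply Series_ext; intros n0. apply Series_ext; intros n1.
  unfold z_term, Tm. destruct (Q pmf i n0); destruct (Q pmf j n1); simpl; ring.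
Qed.

Section S.
Variables (pmf : nat -> nat -> R) (i j : nat) (c : R).
Hypothesis Hc : 0 < c < 1.
Hypotheses (Hi2 : ex_series (m_term pmf i 2 (/ (1 - c)))) (Hi0 : ex_series (m_term pmf i 0 (1 - c)))
  (Hj2 : ex_series (m_term pmf j 2 (/ (1 - c)))) (Hj0 : ex_series (m_term pmf j 0 (1 - c))).

Lemma Tm_ok k x : (k <= 4)%nat -> Rabs x < c -> ds_ok (Tm pmf i j k x).
Proof.
  intros Hk Hx. set (r := (Rabs x + c) / 2). pose proof (Rabs_pos x).
  assert (Hr : 0 <= r < c) by (unfold r; lra).
  apply (Tm_dom pmf i j k x r Hk); [unfold r; lra| apply (Ub_series _ _ c); auto ..].
Qed.

Lemma S0_lower x : Rabs x < c ->
  Series (m_term pmf i 0 (1 - c)) * Series (m_term pmf j 0 (1 - c)) <= Sk pmf i j 0 x.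
Proof.
  intros Hx.
  destruct (ds_prod (m_term pmf i 0 (1 - c)) (m_term pmf j 0 (1 - c))) as [Ok E]; auto using m_term_nonneg.
  rewrite <- E. apply ds_le; [| auto | apply Tm_ok; auto; lia].
  intros n0 n1. unfold m_term, Tm.
  destruct (Q pmf i n0) as [a| |]; destruct (Q pmf j n1) as [b| |]; rewrite ?Rmult_0_l, ?Rmult_0_r; try lra.
  rewrite !pow_O, !Rmult_1_r, Rmult_1_l, <- exp_plus. apply exp_le.
  set (K := / (1 - c)).
  assert (HK : K * (1 - c) = 1) by (unfold K; field; lra).
  replace (- a ^ 2 / (2 * (1 - c)) + - b ^ 2 / (2 * (1 - c))) with (- K * (a^2 + b^2) / 2) by (unfold K; field; lra).
  assert (E1 : - (x*(a*b)) <= Rabs x * (Rabs a * Rabs b)).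
  { rewrite <- !Rabs_mult. rewrite <- Rabs_Ropp. apply Rle_abs. }
  assert (E2 : 2 * (Rabs a * Rabs b) <= a^2 + b^2).
  { rewrite <- (pow2_abs a), <- (pow2_abs b). pose proof (pow2_ge_0 (Rabs a - Rabs b)). simpl in *. lra. }
  assert (HK1 : 1 <= K) by (unfold K; apply Rle_trans with (/ 1); [lra| apply Rinv_le_contravar; lra]).
  assert (0 <= a^2 + b^2) by (pose proof (pow2_ge_0 a); pose proof (pow2_ge_0 b); lra).
  assert (0 <= Rabs a * Rabs b) by (apply Rmult_le_pos; apply Rabs_pos).
  assert (Rabs x * (Rabs a * Rabs b) <= c * (Rabs a * Rabs b)) by (apply Rmult_le_compat_r; lra).
  assert (c * (a^2+b^2) <= (K - 1) * (a^2 + b^2)).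
  { apply Rmult_le_compat_r; auto. nra. }
  replace (- (1 / 2) * (a ^ 2 + b ^ 2 - 2 * x * a * b)) with (-(a^2+b^2)/2 + x*(a*b)) by field.
  assert (c * (Rabs a * Rabs b) <= c * ((a^2+b^2)/2)) by (apply Rmult_le_compat_l; lra).
  replace (- K * (a ^ 2 + b ^ 2) / 2) with (-(a^2+b^2)/2 - ((K-1)*(a^2+b^2))/2) by field.
  set (u := a^2+b^2) in *. set (v := x*(a*b)) in *. set (w := Rabs a * Rabs b) in *.
  set (t := (K-1)*u) in *. 
  assert (c * (u/2) = (c*u)/2) by field.
  lra.
Qed.

Lemma S2_upper x : Rabs x < c ->
  Sk pmf i j 2 x <= Series (m_term pmf i 2 (/ (1 - c))) * Series (m_term pmf j 2 (/ (1 - c))).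
Proof.
  intros Hx.
  destruct (ds_prod (m_term pmf i 2 (/ (1 - c))) (m_term pmf j 2 (/ (1 - c)))) as [Ok E]; auto using m_term_nonneg.
  rewrite <- E. apply ds_le; [| apply Tm_ok; auto; lia | auto].
  intros n0 n1. unfold m_term, Tm.
  destruct (Q pmf i n0) as [a| |]; destruct (Q pmf j n1) as [b| |]; try lra.
  rewrite !pow2_abs.
  replace (- a ^ 2 / (2 * / (1 - c))) with (- (1 - c) * a ^ 2 / 2) by (field; lra).
  replace (- b ^ 2 / (2 * / (1 - c))) with (- (1 - c) * b ^ 2 / 2) by (field; lra).
  pose proof (key_exp a b x 0 c ltac:(lra) ltac:(lra)) as K.
  rewrite Rmult_0_l, exp_0, Rmult_1_r in K.
  replace (exp (- (1 - c) * a ^ 2 / 2) * a ^ 2 * (exp (- (1 - c) * b ^ 2 / 2) * b ^ 2))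
    with ((a*b)^2 * (exp (- (1 - c) * a ^ 2 / 2) * exp (- (1 - c) * b ^ 2 / 2))) by ring.
  apply Rmult_le_compat_l; auto. apply pow2_ge_0.
Qed.

Lemma S2_nonneg x : Rabs x < c -> 0 <= Sk pmf i j 2 x.
Proof.
  intros Hx. destruct (Tm_ok 2 x ltac:(lia) Hx) as [O1 O2].
  unfold Sk, DS. apply Series_ge0; auto. intros n0. apply Series_ge0; auto.
  intros n1. unfold Tm. destruct (Q pmf i n0); destruct (Q pmf j n1); try lra.
  apply Rmult_le_pos. apply pow2_ge_0. left; apply exp_pos.
Qed.

Lemma CS_lam x lam : Rabs x < c -> 0 < lam ->
  2 * Rabs (Sk pmf i j 1 x) <= lam * Sk pmf i j 0 x + / lam * Sk pmf i j 2 x.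
Proof.
  intros Hx Hl.
  destruct (ds_lin (Tm pmf i j 0 x) (Tm pmf i j 2 x) lam (/ lam) (Tm_ok 0 x ltac:(lia) Hx) (Tm_ok 2 x ltac:(lia) Hx)) as [OkR ER].
  assert (G : forall s, s = 2 \/ s = -2 ->
     s * Sk pmf i j 1 x <= lam * Sk pmf i j 0 x + / lam * Sk pmf i j 2 x).
  { intros s Hs.
    destruct (ds_lin (Tm pmf i j 1 x) (Tm pmf i j 1 x) s 0 (Tm_ok 1 x ltac:(lia) Hx) (Tm_ok 1 x ltac:(lia) Hx)) as [OkL EL].
    unfold Sk. rewrite <- ER.
    replace (s * DS (Tm pmf i j 1 x)) with (s * DS (Tm pmf i j 1 x) + 0 * DS (Tm pmf i j 1 x)) by ring.
    rewrite <- EL. apply ds_le; auto.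
    intros n0 n1. unfold Tm. destruct (Q pmf i n0) as [a| |]; destruct (Q pmf j n1) as [b| |]; try lra.
    set (e := exp (- (1 / 2) * (a ^ 2 + b ^ 2 - 2 * x * a * b))).
    assert (He : 0 < e) by apply exp_pos.
    set (p := a * b).
    assert (X : lam * (p ^ 0 * e) + / lam * (p ^ 2 * e) - (s * (p ^ 1 * e) + 0 * (p ^ 1 * e))
              = (e * / lam) * (lam - s / 2 * p) ^ 2 + (e * / lam) * (1 - s^2/4) * p^2) by (field; lra).
    assert (s^2 / 4 = 1) by (destruct Hs; subst; field).
    assert (0 <= (e * / lam) * (lam - s / 2 * p) ^ 2).
    { apply Rmult_le_pos. apply Rmult_le_pos; [lra| left; apply Rinv_0_lt_compat; lra]. apply pow2_ge_0. }
    rewrite H in X. lra. }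
  destruct (Rle_dec 0 (Sk pmf i j 1 x)).
  - rewrite Rabs_pos_eq by auto. apply G; auto.
  - rewrite Rabs_left by lra. replace (2 * - Sk pmf i j 1 x) with (-2 * Sk pmf i j 1 x) by ring. apply G; auto.
Qed.

Lemma CS x : Rabs x < c -> 0 < Sk pmf i j 0 x ->
  Sk pmf i j 1 x ^ 2 <= Sk pmf i j 0 x * Sk pmf i j 2 x.
Proof.
  intros Hx H0. pose proof (S2_nonneg x Hx) as H2. pose proof (fun lam => CS_lam x lam Hx) as CL.
  revert H0 H2 CL. generalize (Sk pmf i j 0 x) (Sk pmf i j 1 x) (Sk pmf i j 2 x).
  intros s0 s1 s2 H0 H2 CL.
  destruct (Req_dec s1 0) as [E|E].
  - subst s1. replace (0^2) with 0 by ring. apply Rmult_le_pos; lra.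
  - assert (Ha : 0 < Rabs s1) by (apply Rabs_pos_lt; auto).
    destruct H2 as [H2|H2].
    + pose proof (CL (s2 / Rabs s1) ltac:(apply Rdiv_lt_0_compat; lra)) as K.
      replace (/ (s2 / Rabs s1) * s2) with (Rabs s1) in K by (field; lra).
      rewrite <- pow2_abs.
      assert (2 * Rabs s1 * Rabs s1 <= (s2 / Rabs s1 * s0 + Rabs s1) * Rabs s1) by (apply Rmult_le_compat_r; lra).
      replace ((s2 / Rabs s1 * s0 + Rabs s1) * Rabs s1) with (s2 * s0 + Rabs s1 * Rabs s1) in H by (field; lra).
      simpl. nra.
    + exfalso. pose proof (CL (Rabs s1 / s0) ltac:(apply Rdiv_lt_0_compat; lra)) as K.
      rewrite <- H2 in K.
      replace (Rabs s1 / s0 * s0) with (Rabs s1) in K by (field; lra). lra.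
Qed.

End S.


Lemma final_alg s0 s1 s2 sq m0i m0j m2i m2j M :
  0 < s0 -> 0 <= s2 -> s1^2 <= s0 * s2 -> s2 <= (sq*m2i)*(sq*m2j) -> (sq*m0i)*(sq*m0j) <= s0 ->
  0 < m0i -> 0 < m0j -> 0 <= m2i -> 0 <= m2j -> 0 < sq -> 1 <= sq*sq ->
  m2i^2/m0i^4 <= M -> m2j^2/m0j^4 <= M ->
  Rabs (((-s2) * s0^2 - (-s1)*(INR 2 * s1 * s0^1))/(s0^2)^2) <= 3*M.
Proof.
  intros H0 H2 HCS Hu Hl Hmi Hmj Hni Hnj Hsq Hsq1 Mi Mj.
  replace (((-s2) * s0^2 - (-s1)*(INR 2 * s1 * s0^1))/(s0^2)^2) with ((2*s1^2 - s2*s0)/s0^3)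
    by (simpl; field; lra).
  assert (Hs03 : 0 < s0^3) by (apply pow_lt; auto).
  assert (A1 : Rabs ((2*s1^2 - s2*s0)/s0^3) <= 3 * (s2 / s0^2)).
  { unfold Rdiv. rewrite Rabs_mult, (Rabs_pos_eq (/ s0^3)) by (left; apply Rinv_0_lt_compat; auto).
    assert (Rabs (2 * s1 ^ 2 - s2 * s0) <= 3 * (s2 * s0)).
    { apply Rabs_le. assert (0 <= s1^2) by apply pow2_ge_0. assert (0 <= s2*s0) by nra. lra. }
    apply Rle_trans with (3 * (s2 * s0) * / s0^3).
    apply Rmult_le_compat_r; auto. left; apply Rinv_0_lt_compat; auto.
    right. field. lra. }
  eapply Rle_trans; [exact A1|].
  set (X := m2i / m0i^2). set (Y := m2j / m0j^2).
  assert (HX : 0 <= X) by (unfold X; apply Rmult_le_pos; auto; left; apply Rinv_0_lt_compat; apply pow_lt; auto).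
  assert (HY : 0 <= Y) by (unfold Y; apply Rmult_le_pos; auto; left; apply Rinv_0_lt_compat; apply pow_lt; auto).
  assert (EX : X^2 = m2i^2/m0i^4) by (unfold X; field; lra).
  assert (EY : Y^2 = m2j^2/m0j^4) by (unfold Y; field; lra).
  assert (XY : X * Y <= M) by (pose proof (pow2_ge_0 (X - Y)); nra).
  set (q := sq*sq) in *.
  assert (Hq : 0 < q) by lra.
  assert (L0 : 0 < q * (m0i * m0j)) by (apply Rmult_lt_0_compat; auto; nra).
  assert (Hl' : q * (m0i*m0j) <= s0) by (unfold q; nra).
  assert (Hu' : s2 <= q * (m2i*m2j)) by (unfold q; nra).
  assert (s2 / s0^2 <= q * (m2i*m2j) / (q * (m0i*m0j))^2).
  { unfold Rdiv. apply Rmult_le_compat; auto.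
    left; apply Rinv_0_lt_compat; apply pow_lt; auto.
    apply Rinv_le_contravar. apply pow_lt; auto. apply pow_incr; lra. }
  assert (q * (m2i*m2j) / (q * (m0i*m0j))^2 = (X * Y) / q) by (unfold X, Y; field; lra).
  assert (X * Y / q <= X * Y).
  { unfold Rdiv. rewrite <- (Rmult_1_r (X*Y)) at 2. apply Rmult_le_compat_l. nra.
    rewrite <- Rinv_1. apply Rinv_le_contravar; lra. }
  lra.
Qed.


Theorem mainTheorem11 :
  forall (d : nat) (pmf : nat -> nat -> R) (c : R),
    0 < c < 1 ->
    (forall i, (i < d)%nat -> is_pmf (pmf i)) ->
    (forall l, (l < d)%nat ->
        ex_series (m_term pmf l 2 (/ (1 - c))) /\
        ex_series (m_term pmf l 0 (1 - c)) /\
        0 < m pmf l 0 (1 - c)) ->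
    forall (y : R), Rabs y < c ->
    forall (i j : nat), (i < d)%nat -> (j < d)%nat ->
      (forall y', Rabs y' < c -> ex_derive (z pmf i j) y') /\
      ex_derive_n (z pmf i j) 2 y /\
      Rabs (Derive_n (z pmf i j) 2 y)
        <= 3 * max_over d (fun l => (m pmf l 2 (/ (1 - c))) ^ 2 / (m pmf l 0 (1 - c)) ^ 4).
Proof.
  intros d pmf c Hc _ Hm y Hy i j Hi Hj.
  destruct (Hm i Hi) as [Hi2 [Hi0 Pi]]. destruct (Hm j Hj) as [Hj2 [Hj0 Pj]].
  set (sq := sqrt (2 * PI)).
  assert (HPI := PI2_3_2).
  assert (Hsq : 0 < sq) by (unfold sq; apply sqrt_lt_R0; lra).
  assert (Hsq2 : sq * sq = 2 * PI) by (unfold sq; apply sqrt_sqrt; lra).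
  assert (EP : forall l k u, Series (m_term pmf l k u) = sq * m pmf l k u).
  { intros. unfold m. fold sq. field. lra. }
  assert (Hpos : forall x, Rabs x < c -> 0 < Sk pmf i j 0 x).
  { intros x Hx. pose proof (S0_lower pmf i j c Hc Hi2 Hi0 Hj2 Hj0 x Hx) as L.
    rewrite !EP in L. eapply Rlt_le_trans; [| exact L].
    apply Rmult_lt_0_compat; apply Rmult_lt_0_compat; auto. }
  assert (Hder : forall k x, (k <= 2)%nat -> Rabs x < c -> is_derive (Sk pmf i j k) x (Sk pmf i j (S k) x)).
  { intros k x Hk Hx. apply (Sk_derive pmf i j k c x); auto. }
  assert (Hz' : forall x, Rabs x < c -> is_derive (z pmf i j) x (- Sk pmf i j 1 x / (Sk pmf i j 0 x)^2)).
  { intros x Hx. apply is_derive_ext with (fun t => / Sk pmf i j 0 t).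
    intros t; symmetry; apply z_eq.
    apply is_derive_inv. apply Hder; auto. pose proof (Hpos x Hx); lra. }
  set (g := fun t => - Sk pmf i j 1 t / (Sk pmf i j 0 t)^2).
  set (D2 := ((- Sk pmf i j 2 y) * (Sk pmf i j 0 y)^2 - (- Sk pmf i j 1 y) * (INR 2 * Sk pmf i j 1 y * (Sk pmf i j 0 y)^1)) / ((Sk pmf i j 0 y)^2)^2).
  assert (Hg : is_derive g y D2).
  { unfold g, D2. apply (is_derive_div (fun t => - Sk pmf i j 1 t) (fun t => Sk pmf i j 0 t ^ 2)).
    - apply (is_derive_opp (Sk pmf i j 1)). apply Hder; auto.
    - apply (is_derive_pow (Sk pmf i j 0) 2). apply Hder; auto.
    - pose proof (Hpos y Hy). apply pow_nonzero. lra. }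
  assert (Hloc : is_derive (Derive_n (z pmf i j) 1) y D2).
  { apply (is_derive_ext_loc g). 2: exact Hg.
    assert (He : 0 < c - Rabs y) by lra.
    exists (mkposreal _ He). intros t Ht. change (Rabs (t - y) < c - Rabs y) in Ht.
    assert (Htc : Rabs t < c).
    { replace t with (y + (t - y)) by ring. pose proof (Rabs_triang y (t - y)). lra. }
    simpl. rewrite (Derive_ext _ (z pmf i j)) by reflexivity.
    symmetry. apply is_derive_unique. apply Hz'; auto. }
  split; [|split].
  - intros y' Hy'. exists (- Sk pmf i j 1 y' / (Sk pmf i j 0 y')^2). apply Hz'; auto.
  - simpl. exists D2. exact Hloc.
  - change (Derive_n (z pmf i j) 2 y) with (Derive (Derive_n (z pmf i j) 1) y).
    rewrite (is_derive_unique _ _ _ Hloc). unfold D2.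
    pose proof (S0_lower pmf i j c Hc Hi2 Hi0 Hj2 Hj0 y Hy) as L0.
    pose proof (S2_upper pmf i j c Hc Hi2 Hi0 Hj2 Hj0 y Hy) as U2.
    pose proof (S2_nonneg pmf i j c Hc Hi2 Hi0 Hj2 Hj0 y Hy) as N2.
    pose proof (CS pmf i j c Hc Hi2 Hi0 Hj2 Hj0 y Hy (Hpos y Hy)) as Cs.
    rewrite !EP in L0, U2.
    assert (N2i : 0 <= m pmf i 2 (/ (1 - c))).
    { unfold m. apply Rmult_le_pos. left; apply Rinv_0_lt_compat; auto.
      apply Series_ge0; auto using m_term_nonneg. }
    assert (N2j : 0 <= m pmf j 2 (/ (1 - c))).
    { unfold m. apply Rmult_le_pos. left; apply Rinv_0_lt_compat; auto.
      apply Series_ge0; auto using m_term_nonneg. }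
    pose proof (Hpos y Hy).
    apply (final_alg _ _ _ sq (m pmf i 0 (1 - c)) (m pmf j 0 (1 - c)) (m pmf i 2 (/ (1 - c))) (m pmf j 2 (/ (1 - c)))); try assumption; try lra.
    + apply (max_over_ge d (fun l => m pmf l 2 (/ (1 - c)) ^ 2 / m pmf l 0 (1 - c) ^ 4)); auto.
    + apply (max_over_ge d (fun l => m pmf l 2 (/ (1 - c)) ^ 2 / m pmf l 0 (1 - c) ^ 4)); auto.
Qed.
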